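(* Let $A,G$ be $n\times n$ symmetric positive definite matrices with $G\succeq A$, let $u\in\mathbb{R}^n\setminus\{0\}$, and let $G_+=\mathrm{SR1}(A,G,u)$. Then $$\nu^2(A,G,u)\ge\frac{u^\top(G-A)G_+^{-1}(G-A)u}{u^\top Gu}.$$
   Context: $\nu(A,G,u)=\left(\frac{u^\top(G-A)G^{-1}(G-A)u}{u^\top(A-AG^{-1}A)u}\right)^{1/2}$ for $G\succeq A$, with the convention (used in the paper) that $\nu(A,G,u)=0$ when $(G-A)u=0$. $\mathrm{SR1}(A,G,u)=G$ if $(G-A)u=0$, and otherwise $\mathrm{SR1}(A,G,u)=G-\frac{(G-A)uu^\top(G-A)}{u^\top(G-A)u}$. *)

(* Defs.v *)
From mathcomp Require Import all_boot all_order all_algebra.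
Set Implicit Arguments. Unset Strict Implicit. Unset Printing Implicit Defensive.
Import Order.TTheory GRing.Theory Num.Theory.
Local Open Scope ring_scope.

Definition qform (R : ringType) (n : nat) (x : 'cV[R]_n) (M : 'M[R]_n) (y : 'cV[R]_n) : R :=
  (x^T *m M *m y) 0 0.

Definition symmetric (R : ringType) (n : nat) (A : 'M[R]_n) : Prop := A^T = A.

Definition spd (R : numDomainType) (n : nat) (A : 'M[R]_n) : Prop :=
  symmetric A /\ forall x : 'cV[R]_n, x != 0 -> 0 < qform x A x.

Definition loewner_ge (R : numDomainType) (n : nat) (G A : 'M[R]_n) : Prop :=
  forall x : 'cV[R]_n, 0 <= qform x (G - A) x.

Definition nu (R : rcfType) (n : nat) (A G : 'M[R]_n) (u : 'cV[R]_n) : R :=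
  if (G - A) *m u == 0 then 0
  else Num.sqrt (qform u ((G - A) *m invmx G *m (G - A)) u
                 / qform u (A - A *m invmx G *m A) u).

Definition SR1 (R : fieldType) (n : nat) (A G : 'M[R]_n) (u : 'cV[R]_n) : 'M[R]_n :=
  if (G - A) *m u == 0 then G
  else G - (qform u (G - A) u)^-1 *: ((G - A) *m u *m (u^T *m (G - A))).

(* Main.v *)
Require Import Defs.
From mathcomp Require Import all_boot all_order all_algebra.
From mathcomp Require Import ring lra.
Import Order.TTheory GRing.Theory Num.Theory.
Local Open Scope ring_scope.

Section Q.
Context {R : rcfType} {n : nat}.
Implicit Types (x y z : 'cV[R]_n) (M N : 'M[R]_n).

Lemma qform_sym x M y : M^T = M -> qform x M y = qform y M x.
Proof.
move=> sM; rewrite /qform.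
have -> : y^T *m M *m x = (x^T *m M *m y)^T by rewrite !trmx_mul trmxK sM mulmxA.
by rewrite [in RHS]mxE.
Qed.

Lemma qformDm x M N y : qform x (M + N) y = qform x M y + qform x N y.
Proof. by rewrite /qform mulmxDr mulmxDl [LHS]mxE. Qed.
Lemma qformBm x M N y : qform x (M - N) y = qform x M y - qform x N y.
Proof. by rewrite /qform mulmxBr mulmxBl [LHS]mxE [X in _ + X = _]mxE. Qed.
Lemma qformZm x a M y : qform x (a *: M) y = a * qform x M y.
Proof. by rewrite /qform -scalemxAr -scalemxAl [LHS]mxE. Qed.
Lemma qformDr x M y z : qform x M (y + z) = qform x M y + qform x M z.
Proof. by rewrite /qform mulmxDr [LHS]mxE. Qed.
Lemma qformDl x y M z : qform (x + y) M z = qform x M z + qform y M z.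
Proof. by rewrite /qform linearD /= !mulmxDl [LHS]mxE. Qed.
Lemma qform_mulr x M N y : qform x M (N *m y) = qform x (M *m N) y.
Proof. by rewrite /qform !mulmxA. Qed.
Lemma qform_mull x M N y : qform x (M *m N) y = qform (M^T *m x) N y.
Proof. by rewrite /qform trmx_mul trmxK !mulmxA. Qed.
Lemma qform_rank1 x a b y :
  qform x (a *m b^T) y = qform x 1%:M a * qform b 1%:M y.
Proof.
rewrite /qform !mulmx1.
have -> : x^T *m (a *m b^T) *m y = (x^T *m a) *m (b^T *m y) by rewrite !mulmxA.
by rewrite mxE big_ord1.
Qed.
Lemma qform_mull' x M N y : qform (M *m x) N y = qform x (M^T *m N) y.
Proof. by rewrite qform_mull trmxK. Qed.
Lemma qform_cV1 x y M : qform x M y = qform x 1%:M (M *m y).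
Proof. by rewrite qform_mulr mul1mx. Qed.

Lemma qform_sub x M y N z : M *m y = N *m z -> qform x M y = qform x N z.
Proof. by move=> H; rewrite qform_cV1 H -qform_cV1. Qed.

Lemma spd_unit M : spd M -> M \in unitmx.
Proof.
case=> sM pM; rewrite unitmxE unitfE; apply/negP => /det0P [v v0 vM].
have : 0 < qform v^T M v^T by apply: pM; rewrite trmx_eq0.
by rewrite /qform trmxK vM mul0mx mxE ltxx.
Qed.

End Q.
Arguments qform_sub {R n} x {M y N z}.

Theorem lemma5 (R : rcfType) (n : nat) (A G : 'M[R]_n) (u : 'cV[R]_n) :
  spd A -> spd G -> loewner_ge G A -> u != 0 ->
  qform u ((G - A) *m invmx (SR1 A G u) *m (G - A)) u / qform u G u
    <= nu A G u ^+ 2.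
Proof.
move=> hA hG hGA u0.
have Gu := spd_unit _ hG.
case: hA => sA pA; case: hG => sG pG.
set D := G - A.
have sD : D^T = D by rewrite /D linearB /= sA sG.
set Gi := invmx G.
have sGi : Gi^T = Gi by rewrite /Gi trmx_inv sG.
have GiG : Gi *m G = 1%:M by rewrite /Gi mulVmx.
have GGi : G *m Gi = 1%:M by rewrite /Gi mulmxV.
rewrite /nu /SR1 -/D -/Gi.
case: eqP => [Du0|/eqP Du0].
  rewrite -qform_mulr Du0 /qform mulmx0 mxE mul0r expr0n /=; lra.

set w := D *m u.
have uD : u^T *m D = w^T by rewrite /w trmx_mul sD.
rewrite uD.
set y := Gi *m w. set p := Gi *m (A *m u).
have Gy : G *m y = w by rewrite /y mulmxA GGi mul1mx.
have Gp : G *m p = A *m u by rewrite /p mulmxA GGi mul1mx.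
have GAD : G = A + D by rewrite /D addrC subrK.
have hu : p + y = u.
  by rewrite /p /y -mulmxDr /w /D mulmxBl addrC subrK mulmxA GiG mul1mx.
have Dp : D *m p = A *m y.
  have uy : u - p = y by rewrite -hu addrC addKr.
  by rewrite {1}/D mulmxBl Gp -mulmxBr uy.
set a := qform y G y.
set b := qform y G p.
set c := qform u D u.
set g := qform u G u.
have haw : qform w Gi w = a.
  by rewrite -Gy qform_mulr GiG qform_mull' sG mulmx1.
have ha : qform u (D *m Gi *m D) u = a.
  by rewrite -qform_mulr -/w qform_mull sD -/w haw.
have hb : qform u (A - A *m Gi *m A) u = b.
  rewrite qformBm -qform_mulr qform_mull sA -Gp qform_mulr GiG.
  rewrite qform_mull' sG mulmx1 qform_cV1 -Gp -qform_cV1 -{1}hu qformDl.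
  by rewrite /b addrAC subrr add0r.
have hb2 : b = qform y A y + qform p D p.
  rewrite /b {1}GAD qformDm addrC; congr (_ + _).
    exact: qform_sub _ Dp.
  by rewrite qform_sym // (qform_sub _ Dp).
have hc : c = a + b.
  rewrite /c qform_cV1 -/w -Gy -qform_cV1 -{1}hu qformDl addrC; congr (_ + _).
  by rewrite qform_sym.
have hg : g = c + qform u A u by rewrite /g GAD qformDm addrC.
have y0 : y != 0.
  by apply: contra Du0 => /eqP y0; rewrite -/w -Gy y0 mulmx0.
have b0 : 0 < b.
  rewrite hb2; apply: ltr_wpDr; first exact: hGA.
  exact: pA.
have a0 : 0 < a by exact: pG.
have q0 : 0 < qform u A u by exact: pA.
have c0 : 0 < c by rewrite hc addr_gt0.
set Gp' := G - c^-1 *: (w *m w^T).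
set Hinv := Gi + b^-1 *: (y *m y^T).
have yG : y^T *m G = w^T by rewrite -Gy [RHS]trmx_mul sG.
have yw : y^T *m w = a%:M.
  by rewrite [LHS]mx11_scalar -Gy mulmxA.
have key : Hinv *m Gp' = 1%:M.
  rewrite /Hinv /Gp' mulmxDl !mulmxBr GiG -!scalemxAl -!scalemxAr.
  rewrite (mulmxA Gi w) -/y -(mulmxA y) yG (mulmxA (y *m y^T) w) -(mulmxA y (y^T) w) yw.
  rewrite mul_mx_scalar -scalemxAl !scalerA.
  have gen : forall (k1 k2 k3 : R) (Z : 'M[R]_n),
      k2 = k1 + k3 -> 1%:M - k1 *: Z + (k2 *: Z - k3 *: Z) = 1%:M.
    by move=> k1 k2 k3 Z ->; rewrite scalerDl addrK subrK.
  apply: gen; rewrite hc; field.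
  by rewrite -hc !gt_eqF.
have [_ Gpu] := mulmx1_unit key.
have -> : invmx Gp' = Hinv.
  by rewrite -[invmx Gp']mul1mx -key -mulmxA mulmxV // mulmx1.
have hl : qform u (D *m Hinv *m D) u = a + b^-1 * (a * a).
  rewrite -qform_mulr -/w qform_mull sD -/w.
  rewrite /Hinv qformDm haw qformZm qform_rank1.
  have e1 : qform y 1%:M w = a by rewrite -Gy qform_mulr mul1mx.
  by rewrite qform_sym ?trmx1 // e1.
rewrite hl ha hb sqr_sqrtr; last by rewrite divr_ge0 // ltW.
rewrite -subr_ge0 hg hc.
set q := qform u A u.
have -> : a / b - (a + b^-1 * (a * a)) / (a + b + q) = a * q / (b * (a + b + q)).
  field; rewrite !gt_eqF //; apply: addr_gt0 => //; exact: addr_gt0.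
apply: divr_ge0; first by rewrite mulr_ge0 // ltW.
by rewrite mulr_ge0 // ltW // !addr_gt0.
Qed.
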